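(* Assume $(\boldsymbol\lambda,\boldsymbol\mu)$ satisfies (H) (notation as there) and that there exists a good sequence $v_{\omega.\mu}=v_{\mathbf k_0}\overset{\bullet}{\to}\cdots\overset{\bullet}{\to}v_{\mathbf k_e}\overset{t}{\to}v_{\mathbf k_{e+1}}\overset{\bullet}{\to}\cdots\overset{\bullet}{\to}v_{\mathbf k_N}=v_\lambda$ with respect to $(\lambda,\mu)$, where $t\in\{2,3,4\}$ is the index of the rule used at the unique step with $m=1$. Then this good sequence is unique, $t$ is uniquely determined, $(\gamma,\delta)\neq(0,0)$, and $h\equiv\eta\pmod{nl}$ for some $\eta\in\{0,\gamma,\delta,\gamma+\delta\}$.
   Context: Fix $n,l,m\ge1$, $\mathbf s_l=(s_1,\dots,s_l)\in\mathbb Z^l$, $s=\sum s_b$. Each $k\in\mathbb Z$ is uniquely $k=c(k)+n(d(k)-1)+nl\,m(k)$, $c(k)\in\{1..n\}$, $d(k)\in\{1..l\}$; $\phi(k)=c(k)+n\,m(k)$. $\Pi^l_m$ = $l$-tuples of partitions of total size $m$; $\boldsymbol\lambda\leftrightarrow\lambda$ iff $\{(\lambda^{(b)}_i+s_b+1-i,b)\}=\{(\phi(k),d(k)):k\in\{\lambda_i+s+1-i:i\ge1\}\}$; $\boldsymbol\lambda\prec\boldsymbol\mu$ iff $\lambda\lhd\mu$ (strict dominance). For $|\lambda|=r$, $\boldsymbol\beta(\lambda)=(\lambda_i+s+1-i)_{i\le r}$, $B(\lambda)$ its set. (H): $\boldsymbol\lambda,\boldsymbol\mu\in\Pi^l_m$,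 $\boldsymbol\lambda\leftrightarrow\lambda$, $\boldsymbol\mu\leftrightarrow\mu$, $\boldsymbol\lambda\prec\boldsymbol\mu$, $|\lambda|=|\mu|=r$, $\#(B(\lambda)\cap B(\mu))=r-2$. Under (H): $\boldsymbol\beta(\mu)=(\beta_i)$; $\lambda/(\lambda\cap\mu)$, $\mu/(\lambda\cap\mu)$ are ribbons of a common length $h$; $x$ is the row of the head of $\lambda/(\lambda\cap\mu)$, $y$ the row of the tail of $\mu/(\lambda\cap\mu)$; $B(\lambda)=(B(\mu)\setminus\{\beta_x,\beta_y\})\cup\{\beta_x+h,\beta_y-h\}$; $\gamma,\delta\in\{0..nl-1\}$ are the residues mod $nl$ of $c(\beta_y)-c(\beta_x)$ and $n(d(\beta_y)-d(\beta_x))$. Wedge space (Uglov): $\mathbb C(q)$-span of $v_{k_1}\wedge v_{k_2}\wedge\cdots$ ($k_i=s+1-i$ for $i\gg0$) with basis the ordered symbols; an adjacent pair $v_{k_1}\wedge v_{k_2}$, $k_1\le k_2$, is straightened by (with $\gamma',\delta'$ the residues mod $nl$ of $c(k_2)-c(k_1)$, $n(d(k_2)-d(k_1))$; sums over $i$ giving ordered two-factor wedges): (R1) $\gamma'=\delta'=0$: $v_{k_1}\wedge v_{k_2}=-v_{k_2}\wedge v_{k_1}$. (R2) $\gamma'>0,\delta'=0$: $=-q^{-1}v_{k_2}\wedge v_{k_1}-(q^{-2}-1)\sum_{i\ge1}q^{-2i+1}v_{k_2-nli}\wedge v_{k_1+nli}+(q^{-2}-1)\sum_{i\ge0}q^{-2i}v_{k_2-\gamma'-nli}\wedge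 v_{k_1+\gamma'+nli}$. (R3) $\gamma'=0,\delta'>0$: $=-qv_{k_2}\wedge v_{k_1}-(q^2-1)\sum_{i\ge1}q^{2i-1}v_{k_2-nli}\wedge v_{k_1+nli}+(q^2-1)\sum_{i\ge0}q^{2i}v_{k_2-\delta'-nli}\wedge v_{k_1+\delta'+nli}$. (R4) $\gamma',\delta'>0$: $=-v_{k_2}\wedge v_{k_1}-(q-q^{-1})\sum_{i\ge1}\frac{q^{2i}-q^{-2i}}{q+q^{-1}}v_{k_2-nli}\wedge v_{k_1+nli}-(q-q^{-1})\sum_{i\ge0}\frac{q^{2i+1}+q^{-2i-1}}{q+q^{-1}}v_{k_2-\gamma'-nli}\wedge v_{k_1+\gamma'+nli}+(q-q^{-1})\sum_{i\ge0}\frac{q^{2i+1}+q^{-2i-1}}{q+q^{-1}}v_{k_2-\delta'-nli}\wedge v_{k_1+\delta'+nli}+(q-q^{-1})\sum_{i\ge0}\frac{q^{2i+2}-q^{-2i-2}}{q+q^{-1}}v_{k_2-\gamma'-\delta'-nli}\wedge v_{k_1+\gamma'+\delta'+nli}$. Sequences: wedges $v_{\mathbf k}$ with first $r$ indices $\mathbf k$ and fixed tail $s-r,s-r-1,\dots$; $\sigma.(k_1,\dots,k_r)=(k_{\sigma^{-1}(1)},\dots)$; $\omega$ longest element; $v_\lambda=v_{\boldsymbol\beta(\lambda)}$, $v_{\omega.\mu}=v_{\omega.\boldsymbol\beta(\mu)}$. $v_{\mathbf k}\to v_{\mathbf l}$ if there is $i$ with $k_i\le k_{i+1}$, $k_j>k_{j+1}$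 for $j<i$, $k_j=l_j$ for $j\notin\{i,i+1\}$, and $v_{l_i}\wedge v_{l_{i+1}}$ has nonzero coefficient in the straightening of $v_{k_i}\wedge v_{k_{i+1}}$ by the applicable rule $(R_t)$; written $\overset{\bullet}{\to}$ (with $m=0$) if $(l_i,l_{i+1})=(k_{i+1},k_i)$, else $\overset{t}{\to}$ (with $m=1$). A good sequence for $(\lambda,\mu)$ is a chain $v_{\omega.\mu}\to\cdots\to v_\lambda$ with total $m$ equal to $1$. *)

(* Defs.v *)
From mathcomp Require Import all_boot all_algebra.
Set Implicit Arguments. Unset Strict Implicit. Unset Printing Implicit Defensive.
Import GRing.Theory Num.Theory.
Local Open Scope ring_scope.

(* k = c(k) + n(d(k)-1) + nl m(k), c in 1..n, d in 1..l *)
Definition cc (n : nat) (k : int) : int := ((k - 1) %% n%:Z)%Z + 1.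
Definition dd (n l : nat) (k : int) : int := ((((k - 1) %/ n%:Z)%Z) %% l%:Z)%Z + 1.
Definition mm (n l : nat) (k : int) : int := ((k - 1) %/ (n * l)%N%:Z)%Z.
Definition phi (n l : nat) (k : int) : int := cc n k + n%:Z * mm n l k.

(* i-th part (1-indexed) of a partition, 0 beyond its length *)
Definition part (lam : seq nat) (i : nat) : nat := nth 0%N lam i.-1.
Definition is_partition (lam : seq nat) : bool :=
  sorted geq lam && all (fun x => 0 < x)%N lam.
Definition is_multipartition (l m : nat) (mp : seq (seq nat)) : bool :=
  [&& size mp == l, all is_partition mp & sumn (map sumn mp) == m].
Definition charge_sum (sl : seq int) : int := \sum_(x <- sl) x.

Definition corr (n l : nat) (sl : seq int) (mp : seq (seq nat)) (lam : seq nat) : Prop :=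
  forall (x : int) (b : nat),
    ((1 <= b <= l)%N /\ exists2 i, (1 <= i)%N &
        x = (part (nth [::] mp b.-1) i)%:Z + nth 0 sl b.-1 + 1 - i%:Z)
    <-> (exists2 i, (1 <= i)%N &
        let k := (part lam i)%:Z + charge_sum sl + 1 - i%:Z in phi n l k = x /\ dd n l k = b%:Z).

Definition dom (lam mu : seq nat) : Prop := forall k, (sumn (take k lam) <= sumn (take k mu))%N.
Definition sdom (lam mu : seq nat) : Prop := dom lam mu /\ lam <> mu.

Definition beta (s : int) (lam : seq nat) (r : nat) : seq int :=
  [seq (part lam i)%:Z + s + 1 - i%:Z | i <- iota 1 r].

Definition pmeet (lam mu : seq nat) : seq nat := [seq minn p.1 p.2 | p <- zip lam mu].

Definition gamp (n l : nat) (k1 k2 : int) : int := ((cc n k2 - cc n k1) %% (n * l)%N%:Z)%Z.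
Definition delp (n l : nat) (k1 k2 : int) : int :=
  ((n%:Z * (dd n l k2 - dd n l k1)) %% (n * l)%N%:Z)%Z.
Definition rule (n l : nat) (k1 k2 : int) : nat :=
  if gamp n l k1 k2 == 0 then (if delp n l k1 k2 == 0 then 1%N else 3%N)
  else (if delp n l k1 k2 == 0 then 2%N else 4%N).
(* the "shifts" g + nl i occurring in the sums of the applicable rule *)
Definition rule_gens (n l : nat) (k1 k2 : int) : seq int :=
  let g := gamp n l k1 k2 in let d := delp n l k1 k2 in
  match rule n l k1 k2 with
  | 1%N => [::] | 2%N => [:: g] | 3%N => [:: d] | _ => [:: g; d; g + d] end.
Definition shift_ok (n l : nat) (k1 k2 e : int) : Prop :=
  e = 0 \/
  (rule n l k1 k2 <> 1%N /\
   ((exists2 i : nat, (1 <= i)%N & e = (n * l)%N%:Z * i%:Z) \/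
    (exists2 g, g \in rule_gens n l k1 k2 & exists i : nat, e = g + (n * l)%N%:Z * i%:Z))).
(* v_a /\ v_b (ordered, a > b) has nonzero coefficient in straightening v_k1 /\ v_k2 *)
Definition term (n l : nat) (k1 k2 a b : int) : Prop :=
  b < a /\ exists e, [/\ shift_ok n l k1 k2 e, a = k2 - e & b = k1 + e].

(* v_kk -> v_ll ; lab = None for a bullet step, Some t for a step of type t *)
Definition step (n l : nat) (kk ll : seq int) (lab : option nat) : Prop :=
  size ll = size kk /\
  exists i : nat, (i.+1 < size kk)%N /\ [/\
    nth 0 kk i <= nth 0 kk i.+1,
    (forall j, (j < i)%N -> nth 0 kk j.+1 < nth 0 kk j),
    (forall j, j != i -> j != i.+1 -> nth 0 ll j = nth 0 kk j),
    term n l (nth 0 kk i) (nth 0 kk i.+1) (nth 0 ll i) (nth 0 ll i.+1) &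
    lab = (if (nth 0 ll i == nth 0 kk i.+1) && (nth 0 ll i.+1 == nth 0 kk i) then None
           else Some (rule n l (nth 0 kk i) (nth 0 kk i.+1)))].

Definition good (n l : nat) (s : int) (lam mu : seq nat) (r : nat)
    (ks : seq (seq int)) (labs : seq (option nat)) : Prop :=
  [/\ size ks = (size labs).+1,
      nth [::] ks 0 = rev (beta s mu r),
      nth [::] ks (size labs) = beta s lam r,
      (forall j, (j < size labs)%N -> step n l (nth [::] ks j) (nth [::] ks j.+1) (nth None labs j)) &
      count isSome labs = 1%N].

(* Main.v *)
Require Import Defs.
From mathcomp Require Import all_boot all_algebra.
From mathcomp Require Import zify.
Import GRing.Theory Num.Theory.
Local Open Scope ring_scope.
Set Implicit Arguments. Unset Strict Implicit.

Definition swp (kk : seq int) (i : nat) (a b : int) := take i kk ++ a :: b :: drop i.+2 kk.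

Lemma size_swp kk i a b : (i.+1 < size kk)%N -> size (swp kk i a b) = size kk.
Proof. move=> H; rewrite /swp size_cat /= size_takel ?size_drop; lia. Qed.

Lemma nth_swp kk i a b j : (i.+1 < size kk)%N ->
  nth 0 (swp kk i a b) j = if j == i then a else if j == i.+1 then b else nth 0 kk j.
Proof.
move=> H; rewrite /swp nth_cat size_take.
have -> : (if (i < size kk)%N then i else size kk) = i by case: ifP => //; lia.
case: (ltngtP j i) => Hji.
- rewrite nth_take // (_ : (j == i.+1) = false) //; lia.
- have [k ->] : exists k, j = (i + k.+1)%N by exists (j - i).-1; lia.
  rewrite (_ : (i + k.+1 - i = k.+1)%N); last lia.
  case: k => [|k] /=; first by rewrite addn1 eqxx.
  rewrite nth_drop (_ : (i + k.+2 == i.+1) = false); last lia.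
  congr nth; lia.
- by rewrite Hji subnn.
Qed.

Lemma swp_id kk i : (i.+1 < size kk)%N -> swp kk i (nth 0 kk i) (nth 0 kk i.+1) = kk.
Proof.
move=> H; apply: (@eq_from_nth _ 0); first by rewrite size_swp.
move=> j _; rewrite nth_swp //; case: eqP => [->|_] //; case: eqP => [->|] //.
Qed.

Lemma perm_swp kk i a b :
  perm_eq (swp kk i a b) (a :: b :: (take i kk ++ drop i.+2 kk)).
Proof.
rewrite /swp -[a :: b :: drop _ _]/([:: a; b] ++ drop i.+2 kk).
by rewrite perm_catCA.
Qed.

Definition fasc (kk : seq int) (i : nat) :=
  [/\ (i.+1 < size kk)%N, nth 0 kk i <= nth 0 kk i.+1 &
      forall j, (j < i)%N -> nth 0 kk j.+1 < nth 0 kk j].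

Lemma fasc_uniq kk i j : fasc kk i -> fasc kk j -> i = j.
Proof.
move=> [Hi1 Hi2 Hi3] [Hj1 Hj2 Hj3].
case: (ltngtP i j) => // H.
- have := Hj3 _ H; lia.
- have := Hi3 _ H; lia.
Qed.

Arguments fasc_uniq {kk i j}.

Lemma step_inv n l kk ll lab : step n l kk ll lab -> exists i, [/\ fasc kk i,
  ll = swp kk i (nth 0 ll i) (nth 0 ll i.+1),
  term n l (nth 0 kk i) (nth 0 kk i.+1) (nth 0 ll i) (nth 0 ll i.+1) &
  lab = (if (nth 0 ll i == nth 0 kk i.+1) && (nth 0 ll i.+1 == nth 0 kk i) then None
           else Some (rule n l (nth 0 kk i) (nth 0 kk i.+1)))].
Proof.
move=> [Hs [i [Hi [H1 H2 H3 H4 H5]]]]; exists i; split => //.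
apply: (@eq_from_nth _ 0); first by rewrite size_swp // Hs.
move=> j _; rewrite nth_swp //; case: eqP => [->|/eqP Ha] //; case: eqP => [->|/eqP Hb] //.
by rewrite H3.
Qed.

Lemma step_none n l kk ll : step n l kk ll None -> exists i, fasc kk i /\
  ll = swp kk i (nth 0 kk i.+1) (nth 0 kk i).
Proof.
move=> /step_inv [i [Hf Hll Ht]]; case: ifP => // /andP [/eqP E1 /eqP E2] _.
by exists i; rewrite -E1 -E2.
Qed.

Lemma step_none_det n l kk ll ll' : step n l kk ll None -> step n l kk ll' None -> ll = ll'.
Proof.
move=> /step_none [i [Hi ->]] /step_none [j [Hj ->]].
by rewrite (fasc_uniq Hi Hj).
Qed.

Lemma step_lab_det n l kk ll lab lab' : step n l kk ll lab -> step n l kk ll lab' -> lab = lab'.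
Proof.
move=> /step_inv [i [Hi _ _ ->]] /step_inv [j [Hj _ _ ->]].
by rewrite (fasc_uniq Hi Hj).
Qed.

Lemma step_none_perm n l kk ll : step n l kk ll None -> perm_eq ll kk.
Proof.
move=> /step_none [i [[Hi _ _] ->]].
apply: (perm_trans (perm_swp _ _ _ _)).
have E := perm_swp kk i (nth 0 kk i) (nth 0 kk i.+1); rewrite swp_id // in E.
rewrite perm_sym; apply: (perm_trans E).
by rewrite (perm_catCA [:: nth 0 kk i] [:: nth 0 kk i.+1]).
Qed.

Lemma size_beta s lam r : size (beta s lam r) = r.
Proof. by rewrite /beta size_map size_iota. Qed.

Lemma nth_beta s lam r i : (i < r)%N ->
  nth 0 (beta s lam r) i = (part lam i.+1)%:Z + s + 1 - (i.+1)%:Z.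
Proof. by move=> H; rewrite /beta (nth_map 0%N) ?size_iota // nth_iota // add1n. Qed.

Lemma part_mono lam i j : is_partition lam -> (1 <= i <= j)%N -> (part lam j <= part lam i)%N.
Proof.
move=> /andP [Hs _] /andP [Hi Hij]; rewrite /part.
case: (ltnP j.-1 (size lam)) => Hj; last by rewrite nth_default.
have := @sorted_leq_nth _ geq _ _ 0%N lam Hs i.-1 j.-1.
rewrite !inE /=; apply; try lia.
- by move=> a b c /= H1 H2; apply: leq_trans H2 H1.
- by move=> a /=.
Qed.

Lemma beta_lt s lam r i j : is_partition lam -> (i < j)%N -> (j < r)%N ->
  nth 0 (beta s lam r) j < nth 0 (beta s lam r) i.
Proof.
move=> Hp Hij Hj; rewrite !nth_beta //; last lia.
have H : (part lam j.+1 <= part lam i.+1)%N by apply: part_mono => //; lia.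
lia.
Qed.

Lemma beta_uniq s lam r : is_partition lam -> uniq (beta s lam r).
Proof.
move=> Hp; apply: (@sorted_uniq _ (fun a b : int => b < a)).
- by move=> a b c /= H1 H2; lia.
- by move=> a /=; lia.
apply/(sortedP 0) => i; rewrite size_beta => Hi /=; apply: beta_lt => //.
Qed.

Lemma no_step_beta n l s lam r ll lab : is_partition lam ->
  ~ step n l (beta s lam r) ll lab.
Proof.
move=> Hp /step_inv [i [[Hi H1 _] _ _ _]]; rewrite size_beta in Hi.
have := @beta_lt s lam r i i.+1 Hp (ltnSn _) Hi; lia.
Qed.

Lemma idx_bullet n l kk ll : step n l kk ll None -> uniq kk -> exists i, [/\ fasc kk i,
  nth 0 kk i < nth 0 kk i.+1 &
  forall x, index x ll = if x == nth 0 kk i then i.+1 else if x == nth 0 kk i.+1 then i else index x kk].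
Proof.
move=> Hst Hu; have Hp := step_none_perm Hst.
have Hul : uniq ll by rewrite (perm_uniq Hp).
move: Hst => /step_none [i [[Hi H1 H2] Hll]].
have Hne : nth 0 kk i != nth 0 kk i.+1.
  rewrite nth_uniq ?(ltnW Hi) //; lia.
exists i; split => //; first by move: Hne H1; lia.
have Hs : size ll = size kk by rewrite Hll size_swp.
move=> x; case: eqP => [->|/eqP Hx1].
  have -> : nth 0 kk i = nth 0 ll i.+1 by rewrite Hll nth_swp // (_ : (i.+1 == i) = false) ?eqxx //; lia.
  by rewrite index_uniq // Hs.
case: eqP => [->|/eqP Hx2].
  have -> : nth 0 kk i.+1 = nth 0 ll i by rewrite Hll nth_swp // eqxx.
  by rewrite index_uniq // Hs ltnW.
case Hin: (x \in kk).
- set j := index x kk.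
  have Hj : (j < size kk)%N by rewrite index_mem.
  have Hxj : nth 0 kk j = x by rewrite nth_index.
  have Hji : j != i by apply/eqP => E; move: Hx1; rewrite -Hxj E eqxx.
  have Hji1 : j != i.+1 by apply/eqP => E; move: Hx2; rewrite -Hxj E eqxx.
  have -> : x = nth 0 ll j by rewrite Hll nth_swp // (negbTE Hji) (negbTE Hji1).
  by rewrite index_uniq // Hs.
- have Hnl : x \notin ll by rewrite (perm_mem Hp) Hin.
  by rewrite !memNindex ?Hin // Hs.
Qed.

Lemma order_keep n l kk ll (u v : int) : step n l kk ll None -> uniq kk -> u < v ->
  (index v kk < index u kk)%N -> (index v ll < index u ll)%N.
Proof.
move=> Hst Hu Huv Hlt.
have [i [[Hi H1 H2] Hpq Hidx]] := idx_bullet Hst Hu.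
rewrite !Hidx.
set p := nth 0 kk i; set q := nth 0 kk i.+1.
have Ip : index p kk = i by rewrite index_uniq // ltnW.
have Iq : index q kk = i.+1 by rewrite index_uniq.
have Iother : forall x : int, x != p -> x != q -> index x kk <> i /\ index x kk <> i.+1.
  move=> x Hxp Hxq; case Hin: (x \in kk); last first.
    rewrite memNindex ?Hin //; split; move=> E; rewrite E in Hi; lia.
  split => E.
  - by move: Hxp; rewrite -(nth_index 0 Hin) E eqxx.
  - by move: Hxq; rewrite -(nth_index 0 Hin) E eqxx.
case: (eqVneq u p) => Eup; case: (eqVneq u q) => Euq;
case: (eqVneq v p) => Evp; case: (eqVneq v q) => Evq => //=.
all: move: Hlt; rewrite ?Eup ?Euq ?Evp ?Evq ?Ip ?Iq => Hlt.
all: try (have [? ?] := Iother _ Eup Euq); try (have [? ?] := Iother _ Evp Evq).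
all: lia.
Qed.

Lemma nat_aux (x y : bool) (k : nat) : (x + (y + k))%N = k -> ~~ x && ~~ y.
Proof. by case: x; case: y => /=; lia. Qed.

Lemma int_lt_of (u v : int) : u <= v -> u != v -> u < v.
Proof. lia. Qed.

Lemma single_some (labs : seq (option nat)) : count isSome labs = 1%N ->
  exists e, [/\ (e < size labs)%N, nth None labs e != None &
    forall j, j != e -> nth None labs j = None].
Proof.
move=> Hc.
have Hh : has isSome labs by rewrite has_count Hc.
set e := find isSome labs.
have He : (e < size labs)%N by rewrite -has_find.
have Hne : isSome (nth None labs e) by apply: nth_find.
exists e; split => //; first by case: (nth None labs e) Hne.
move=> j Hj.
case: (ltnP j (size labs)) => Hjs; last by rewrite nth_default.
case Hs: (nth None labs j) => [x|] //; exfalso.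
case: (ltngtP j e) => Hje; last by move: Hj; rewrite Hje eqxx.
- by move: (before_find None Hje); rewrite -/e Hs.
- have H1 : (0 < count isSome (take e.+1 labs))%N.
    rewrite -has_count; apply/(has_nthP None); exists e.
      by rewrite size_takel //.
    by rewrite nth_take.
  have H2 : (0 < count isSome (drop e.+1 labs))%N.
    rewrite -has_count; apply/(has_nthP None); exists (j - e.+1)%N.
      by rewrite size_drop; lia.
    by rewrite nth_drop subnKC // Hs.
  move: Hc; rewrite -(cat_take_drop e.+1 labs) count_cat; lia.
Qed.

Section Good.
Variables (n l : nat) (s : int) (lam mu : seq nat) (r : nat)
  (ks : seq (seq int)) (labs : seq (option nat)).
Hypotheses (Hpl : is_partition lam) (Hpm : is_partition mu)
  (Hcnt : size [seq z <- beta s lam r | z \in beta s mu r] = (r - 2)%N)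
  (G : good n l s lam mu r ks labs).

Local Notation KS j := (nth [::] ks j).
Local Notation bmu := (beta s mu r).
Local Notation blam := (beta s lam r).

Lemma good_steps j : (j < size labs)%N -> step n l (KS j) (KS j.+1) (nth None labs j).
Proof. by case: G => _ _ _ H _; apply: H. Qed.

Lemma good_K : exists e i u v a b,
  [/\ (e < size labs)%N, nth None labs e != None,
      (forall j, j != e -> nth None labs j = None),
      (forall j, (j <= e)%N -> perm_eq (KS j) (rev bmu)) &
      fasc (KS e) i] /\
  [/\ u = nth 0 (KS e) i, v = nth 0 (KS e) i.+1,
      KS e.+1 = swp (KS e) i a b, term n l u v a b & ~~ ((a == v) && (b == u))] /\
  [/\ u < v, b < a, u \in bmu, v \in bmu & (a \notin bmu) && (b \notin bmu)] /\
  [/\ (u \notin blam) && (v \notin blam), (a \in blam) && (b \in blam),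
      (forall w, w \in bmu -> w \notin blam -> w = u \/ w = v) &
      (forall w, w \in blam -> w \notin bmu -> w = a \/ w = b)].
Proof.
case: G => Hsz H0 HN Hst Hc.
have [e [He Hse Hnone]] := single_some Hc.
have Hpre : forall j, (j <= e)%N -> perm_eq (KS j) (rev bmu).
  elim=> [|j IH] Hj; first by rewrite H0.
  have Hj' : (j < size labs)%N by lia.
  have := Hst j Hj'; rewrite Hnone; last by apply/eqP; lia.
  move/step_none_perm => P; apply: (perm_trans P); apply: IH; lia.
have Hpost : forall d, (e.+1 + d <= size labs)%N -> perm_eq (KS (e.+1 + d)) (KS e.+1).
  elim=> [|d IH] Hd; first by rewrite addn0.
  have Hj' : (e.+1 + d < size labs)%N by lia.
  have := Hst _ Hj'; rewrite Hnone; last by apply/eqP; lia.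
  rewrite addnS; move/step_none_perm => P; apply: (perm_trans P); apply: IH; lia.
have Hlam : perm_eq blam (KS e.+1).
  by rewrite -HN (_ : size labs = e.+1 + (size labs - e.+1))%N ?Hpost //; lia.
have := Hst e He.
case Hl: (nth None labs e) Hse => [t|] // _.
move=> /step_inv [i [Hf Hks Hterm Hlab]].
set u := nth 0 (KS e) i in Hterm Hlab *; set v := nth 0 (KS e) i.+1 in Hterm Hlab *.
set a := nth 0 (KS e.+1) i in Hks Hterm Hlab *; set b := nth 0 (KS e.+1) i.+1 in Hks Hterm Hlab *.
have Hnab : ~~ ((a == v) && (b == u)) by move: Hlab; case: ifP.
have Hpe := Hpre e (leqnn _).
case: (Hf) => Hi Huv _.
set rest := take i (KS e) ++ drop i.+2 (KS e).
have Pe : perm_eq (rev bmu) (u :: v :: rest).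
  rewrite perm_sym in Hpe; apply: (perm_trans Hpe).
  by rewrite -{1}(swp_id Hi) perm_swp.
have Pl : perm_eq blam (a :: b :: rest).
  by apply: (perm_trans Hlam); rewrite Hks perm_swp.
have Hu : uniq (u :: v :: rest) by rewrite -(perm_uniq Pe) rev_uniq beta_uniq.
have Hmu : forall w, (w \in bmu) = (w \in u :: v :: rest) by move=> w; rewrite -(perm_mem Pe) mem_rev.
have Hml : forall w, (w \in blam) = (w \in a :: b :: rest) by move=> w; rewrite (perm_mem Pl).
have Hsr : size rest = (r - 2)%N by move: (perm_size Pe); rewrite size_rev size_beta /= => ->; rewrite !subnS subn0.
have Hcr : count (fun z => z \in bmu) rest = size rest.
  apply/eqP; rewrite -all_count; apply/allP => w Hw; by rewrite Hmu !inE Hw !orbT.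
have Hab : (a \notin bmu) && (b \notin bmu).
  move: Hcnt; rewrite size_filter (permP Pl) /= Hcr Hsr.
  exact: nat_aux.
move: Hu; rewrite /= !inE => /and3P [/norP [Huv' Hur] Hvr _].
exists e, i, u, v, a, b; split; [|split; [|split]].
- by split => //; rewrite Hl.
- by split.
- split.
  + exact: int_lt_of.
  + by case: Hterm.
  + by rewrite Hmu !inE eqxx.
  + by rewrite Hmu !inE eqxx orbT.
  + exact: Hab.
- move: Hab => /andP [Ha Hb].
  split.
  + rewrite (Hml u) (Hml v) !inE (negbTE Hur) (negbTE Hvr) !orbF.
    apply/andP; split; apply/norP; split; apply/negP => /eqP E;
      [move: Ha|move: Hb|move: Ha|move: Hb]; rewrite -E Hmu !inE eqxx ?orbT //.
  + by rewrite (Hml a) (Hml b) !inE !eqxx ?orbT.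
  + move=> w; rewrite Hmu Hml !inE => /or3P [/eqP->|/eqP->|Hw]; first by left.
      by right.
    by rewrite Hw !orbT.
  + move=> w; rewrite Hmu Hml !inE => /or3P [/eqP->|/eqP->|Hw]; first by left.
      by right.
    by rewrite Hw !orbT.
Qed.

End Good.

Lemma cross n l (K2 : nat -> seq int) (k0 : seq int) e1 e2 i1 i2 (u v : int) :
  (e1 < e2)%N -> K2 e1 = k0 -> fasc k0 i1 -> u = nth 0 k0 i1 -> v = nth 0 k0 i1.+1 ->
  fasc (K2 e2) i2 -> u = nth 0 (K2 e2) i2 -> v = nth 0 (K2 e2) i2.+1 -> u < v ->
  (forall j, (e1 <= j < e2)%N -> step n l (K2 j) (K2 j.+1) None) ->
  (forall j, (j <= e2)%N -> uniq (K2 j)) -> False.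
Proof.
move=> Hlt Hk0 Hf1 Hu1 Hv1 Hf2 Hu2 Hv2 Huv Hst Hun.
have Claim : forall d, (e1 + d.+1 <= e2)%N ->
    (index v (K2 (e1 + d.+1)) < index u (K2 (e1 + d.+1)))%N.
  elim=> [|d IH] Hd.
  - have := Hst e1; rewrite leqnn addn1 Hlt => /(_ isT) /step_none [i' [Hf' Hs']].
    rewrite Hk0 in Hf' Hs'; rewrite (fasc_uniq Hf' Hf1) in Hs'.
    case: (Hf1) => Hi _ _.
    have Hun1 : uniq (K2 e1.+1) by apply: Hun.
    have Hsz : size (K2 e1.+1) = size k0 by rewrite Hs' size_swp.
    have -> : v = nth 0 (K2 e1.+1) i1 by rewrite Hs' nth_swp // eqxx.
    have -> : u = nth 0 (K2 e1.+1) i1.+1.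
      by rewrite Hs' nth_swp // (_ : (i1.+1 == i1) = false) ?eqxx //; lia.
    by rewrite !index_uniq // Hsz // ltnW.
  - have IH' := IH ltac:(lia).
    have S := Hst (e1 + d.+1)%N ltac:(lia).
    have U := Hun (e1 + d.+1)%N ltac:(lia).
    rewrite addnS; exact: order_keep S U Huv IH'.
have := Claim (e2 - e1).-1; rewrite (_ : (e1 + (e2 - e1).-1.+1 = e2)%N); last lia.
move=> /(_ (leqnn _)).
case: Hf2 => Hi2 _ _.
have U := Hun e2 (leqnn _).
rewrite Hu2 Hv2 !index_uniq // ?(ltnW Hi2) //; lia.
Qed.

Lemma agree_from n l (K1 K2 : nat -> seq int) k0 N1 N2 :
  K1 k0 = K2 k0 ->
  (forall j, (k0 <= j < N1)%N -> step n l (K1 j) (K1 j.+1) None) ->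
  (forall j, (k0 <= j < N2)%N -> step n l (K2 j) (K2 j.+1) None) ->
  forall d, (k0 + d <= N1)%N -> (k0 + d <= N2)%N -> K1 (k0 + d)%N = K2 (k0 + d)%N.
Proof.
move=> H0 S1 S2; elim=> [|d IH] Hd1 Hd2; first by rewrite addn0.
rewrite addnS; apply: (@step_none_det n l (K1 (k0 + d)%N)).
- apply: S1; lia.
- rewrite IH; try lia; apply: S2; lia.
Qed.

Lemma nones_step n l (K : nat -> seq int) (L : seq (option nat)) e k0 k1 :
  (forall j, (j < size L)%N -> step n l (K j) (K j.+1) (nth None L j)) ->
  (forall j, j != e -> nth None L j = None) ->
  (k1 <= size L)%N -> (e < k0 \/ k1 <= e)%N ->
  forall j, (k0 <= j < k1)%N -> step n l (K j) (K j.+1) None.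
Proof.
move=> Hst Hn Hk1 He j Hj; rewrite -(Hn j); first by apply: Hst; lia.
apply/eqP; lia.
Qed.

Section Uniq.
Variables (n l : nat) (s : int) (lam mu : seq nat) (r : nat)
  (ks ks2 : seq (seq int)) (labs labs2 : seq (option nat)).
Hypotheses (Hpl : is_partition lam) (Hpm : is_partition mu)
  (Hcnt : size [seq z <- beta s lam r | z \in beta s mu r] = (r - 2)%N)
  (G1 : good n l s lam mu r ks labs) (G2 : good n l s lam mu r ks2 labs2).

Local Notation KS j := (nth [::] ks j).
Local Notation KS2 j := (nth [::] ks2 j).

Lemma good_uniq : ks2 = ks /\ labs2 = labs.
Proof.
have [e [i [u [v [a [b [[He Hse Hn Hpre Hf] [[Hu Hv Hks Ht Hnab]
  [[Huv Hba Humu Hvmu Habmu] [Huvl Habl Hw1 Hw2]]]]]]]]]] := good_K Hpl Hpm Hcnt G1.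
have [e2 [i2 [u2 [v2 [a2 [b2 [[He2 Hse2 Hn2 Hpre2 Hf2] [[Hu2 Hv2 Hks2 Ht2 Hnab2]
  [[Huv2 Hba2 Humu2 Hvmu2 Habmu2] [Huvl2 Habl2 Hw12 Hw22]]]]]]]]]] := good_K Hpl Hpm Hcnt G2.
have [Eu Ev] : u2 = u /\ v2 = v.
  move/andP: Huvl2 => [Hu2l Hv2l].
  have := Hw1 _ Humu2 Hu2l; have := Hw1 _ Hvmu2 Hv2l.
  move: Huv Huv2; clear; move=> Huv Huv2 H1 H2; lia.
have [Ea Eb] : a2 = a /\ b2 = b.
  move/andP: Habl2 => [Ha2l Hb2l]; move/andP: Habmu2 => [Ha2m Hb2m].
  have := Hw2 _ Ha2l Ha2m; have := Hw2 _ Hb2l Hb2m.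
  move: Hba Hba2; clear; move=> Hba Hba2 H1 H2; lia.
subst u2 v2 a2 b2.
case: G1 => Hsz1 H01 HN1 Hst1 _; case: G2 => Hsz2 H02 HN2 Hst2 _.
have Hpref : forall j, (j <= e)%N -> (j <= e2)%N -> KS j = KS2 j.
  move=> j; rewrite -[j]add0n; apply: (@agree_from n l (fun j => KS j) (fun j => KS2 j)).
  - by rewrite /= H01 H02.
  - apply: (nones_step Hst1 Hn); [exact: ltnW | by right].
  - apply: (nones_step Hst2 Hn2); [exact: ltnW | by right].
have Huq : forall j, (j <= e2)%N -> uniq (KS2 j).
  by move=> j Hj; rewrite (perm_uniq (Hpre2 j Hj)) rev_uniq beta_uniq.
have Huq1 : forall j, (j <= e)%N -> uniq (KS j).
  by move=> j Hj; rewrite (perm_uniq (Hpre j Hj)) rev_uniq beta_uniq.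
have Ee : e = e2.
  case: (ltngtP e e2) => // Hlt; exfalso.
  - apply: (@cross n l (fun j => KS2 j) (KS e) e e2 i i2 u v) => //.
    + by rewrite Hpref // ltnW.
    + apply: (nones_step Hst2 Hn2); [exact: ltnW | by right].
  - apply: (@cross n l (fun j => KS j) (KS2 e2) e2 e i2 i u v) => //.
    + by rewrite Hpref // ltnW.
    + apply: (nones_step Hst1 Hn); [exact: ltnW | by right].
subst e2.
have Ei : i = i2 by move: Hf2; rewrite -Hpref // => Hf2; exact: fasc_uniq Hf Hf2.
subst i2.
have Hsucc : KS e.+1 = KS2 e.+1 by rewrite Hks Hks2 Hpref.
have Hpost : forall d, (e.+1 + d <= size labs)%N -> (e.+1 + d <= size labs2)%N ->
    KS (e.+1 + d)%N = KS2 (e.+1 + d)%N.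
  apply: (@agree_from n l (fun j => KS j) (fun j => KS2 j)) => //.
  - apply: (nones_step Hst1 Hn) => //; by left.
  - apply: (nones_step Hst2 Hn2) => //; by left.
have Hall : forall j, (j <= size labs)%N -> (j <= size labs2)%N -> KS j = KS2 j.
  move=> j Hj1 Hj2; case: (leqP j e) => Hj; first by apply: Hpref.
  move: Hj1 Hj2; rewrite -(subnKC Hj); exact: Hpost.
have Esz : size labs = size labs2.
  case: (ltngtP (size labs) (size labs2)) => // Hlt; exfalso.
  - have S := Hst2 _ Hlt; rewrite -Hall // ?HN1 in S; last exact: ltnW.
    exact: no_step_beta Hpl S.
  - have S := Hst1 _ Hlt; rewrite Hall // ?HN2 in S; last exact: ltnW.
    exact: no_step_beta Hpl S.
split.
- apply: (@eq_from_nth _ [::]); first by rewrite Hsz1 Hsz2 Esz.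
  move=> j; rewrite Hsz2 ltnS => Hj; by rewrite Hall ?Esz.
- apply: (@eq_from_nth (option nat) None); first by rewrite Esz.
  move=> j Hj; apply: (@step_lab_det n l (KS2 j) (KS2 j.+1)); first by apply: Hst2.
  rewrite -!Hall ?Esz //; try exact: ltnW.
  apply: Hst1; rewrite Esz //.
Qed.

End Uniq.

Lemma small_mult (w N : int) : 0 < N -> 0 <= w * N -> w * N < N -> w * N = 0.
Proof.
move=> HN H1 H2; case: (ltrgt0P w) => Hw.
- have : N <= w * N by rewrite ler_pMl //; lia.
  lia.
- have : w * N < 0 by rewrite pmulr_llt0.
  lia.
- by rewrite Hw mul0r.
Qed.

Lemma modz_eqn (X N : int) : X = (X %/ N)%Z * N + (X %% N)%Z.
Proof. exact: divz_eq. Qed.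

Lemma decomp (n l : nat) (k : int) : exists Q : int,
  k = cc n k + n%:Z * (dd n l k - 1) + Q * (n * l)%N%:Z.
Proof.
rewrite /cc /dd.
set K := (k - 1).
have E1 := modz_eqn K n%:Z.
set q := (K %/ n%:Z)%Z in E1 *.
have E2 := modz_eqn q l%:Z.
exists (q %/ l%:Z)%Z; rewrite PoszM.
have -> : k = K + 1 by rewrite /K; lia.
move: E1 E2; set A := (K %% n%:Z)%Z; set B := (q %% l%:Z)%Z; set C := (q %/ l%:Z)%Z.
move=> E1 E2; rewrite {1}E1 E2; lia.
Qed.

Lemma arith (N gam del Gp Dp T h eps w0 w1 w2 : int) (o : bool) :
  T = gam + del + w0 * N ->
  Gp = (if o then gam else - gam) + w1 * N -> Dp = (if o then del else - del) + w2 * N ->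
  (h = eps /\ o) \/ (h = T - eps /\ o) \/ (h = eps + T /\ ~~ o) ->
  (exists i : int, eps = N * i \/ eps = Gp + N * i \/ eps = Dp + N * i \/ eps = Gp + Dp + N * i) ->
  exists2 eta, eta \in [:: 0; gam; del; gam + del] & (N %| h - eta)%Z.
Proof.
move=> ET EG ED Hh [i Heps].
have M0 : 0 \in [:: 0; gam; del; gam + del] by rewrite inE eqxx.
have M1 : gam \in [:: 0; gam; del; gam + del] by rewrite !inE eqxx ?orbT.
have M2 : del \in [:: 0; gam; del; gam + del] by rewrite !inE eqxx ?orbT.
have M3 : gam + del \in [:: 0; gam; del; gam + del] by rewrite !inE eqxx ?orbT.
case: o EG ED Hh => EG ED [[Hh _]|[[Hh _]|[Hh Ho]]] //;
  case: Heps => [He|[He|[He|He]]].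
- by exists 0 => //; apply/dvdzP; exists i; lia.
- by exists gam => //; apply/dvdzP; exists (w1 + i); lia.
- by exists del => //; apply/dvdzP; exists (w2 + i); lia.
- by exists (gam + del) => //; apply/dvdzP; exists (w1 + w2 + i); lia.
- by exists (gam + del) => //; apply/dvdzP; exists (w0 - i); lia.
- by exists del => //; apply/dvdzP; exists (w0 - w1 - i); lia.
- by exists gam => //; apply/dvdzP; exists (w0 - w2 - i); lia.
- by exists 0 => //; apply/dvdzP; exists (w0 - w1 - w2 - i); lia.
- by exists (gam + del) => //; apply/dvdzP; exists (i + w0); lia.
- by exists del => //; apply/dvdzP; exists (w1 + i + w0); lia.
- by exists gam => //; apply/dvdzP; exists (w2 + i + w0); lia.
- by exists 0 => //; apply/dvdzP; exists (w1 + w2 + i + w0); lia.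
Qed.

Section Part2.
Variables (n l : nat) (s : int) (lam mu : seq nat) (r : nat)
  (ks : seq (seq int)) (labs : seq (option nat)).
Hypotheses (Hn : (1 <= n)%N) (Hl : (1 <= l)%N) (Hpl : is_partition lam) (Hpm : is_partition mu)
  (Hcnt : size [seq z <- beta s lam r | z \in beta s mu r] = (r - 2)%N)
  (G : good n l s lam mu r ks labs).

Lemma part2 (h : nat) (bx by_ : int) :
  (forall z, z \in beta s lam r =
      [|| (z \in beta s mu r) && (z != bx) && (z != by_), z == bx + h%:Z | z == by_ - h%:Z]) ->
  (((cc n by_ - cc n bx) %% (n * l)%N%:Z)%Z,
   ((n%:Z * (dd n l by_ - dd n l bx)) %% (n * l)%N%:Z)%Z) != (0, 0) /\
  exists2 eta, eta \in [:: 0; ((cc n by_ - cc n bx) %% (n * l)%N%:Z)%Z;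
     ((n%:Z * (dd n l by_ - dd n l bx)) %% (n * l)%N%:Z)%Z;
     ((cc n by_ - cc n bx) %% (n * l)%N%:Z)%Z + ((n%:Z * (dd n l by_ - dd n l bx)) %% (n * l)%N%:Z)%Z]
   & (h%:Z == eta %[mod (n * l)%N%:Z])%Z.
Proof.
move=> Hz.
set N := (n * l)%N%:Z.
set gam := ((cc n by_ - cc n bx) %% N)%Z.
set del := ((n%:Z * (dd n l by_ - dd n l bx)) %% N)%Z.
have HNn : (0 < n * l)%N by rewrite muln_gt0 Hn Hl.
have HN : 0 < N by rewrite /N ltz_nat.
have HN0 : N != 0 by move: HN; lia.
have [e [i [u [v [a [b [[He Hse Hnn Hpre Hf] [[Hu Hv Hks Ht Hnab]
  [[Huv Hba Humu Hvmu Habmu] [Huvl Habl Hw1 Hw2]]]]]]]]]] := good_K Hpl Hpm Hcnt G.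
clear Hu Hv Hks Hpre Hf Hse Hnn Hw1 Hw2.
case: Ht => _ [eps [Hsh Ha Hb]].
move/andP: Huvl => [Hul Hvl]; move/andP: Habl => [Hal Hbl]; move/andP: Habmu => [Ham Hbm].
have Hmem1 : forall w, w \in beta s mu r -> w \notin beta s lam r -> w = bx \/ w = by_.
  move=> w Hw Hwl; case: (w =P bx) => [->|/eqP Hbx]; first by left.
  case: (w =P by_) => [->|/eqP Hby]; first by right.
  by move: (Hz w); rewrite (negbTE Hwl) Hw Hbx Hby.
have Hmem2 : forall w, w \in beta s lam r -> w \notin beta s mu r -> w = bx + h%:Z \/ w = by_ - h%:Z.
  move=> w Hw Hwm; move: (Hz w); rewrite Hw (negbTE Hwm) /=.
  by case/esym/orP => /eqP; [left|right].
have Hu' := Hmem1 _ Humu Hul; have Hv' := Hmem1 _ Hvmu Hvl.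
have Ha' := Hmem2 _ Hal Ham; have Hb' := Hmem2 _ Hbl Hbm.
clear Hmem1 Hmem2 Hz Humu Hul Hvmu Hvl Hal Ham Hbl Hbm.
have Heps0 : eps != 0.
  apply/eqP => E; move: Hnab; rewrite Ha Hb E subr0 addr0 !eqxx //.
set Gp := gamp n l u v; set Dp := delp n l u v.
have HGp : 0 <= Gp /\ Gp < N by split; [apply: modz_ge0 | apply: ltz_pmod].
have HDp : 0 <= Dp /\ Dp < N by split; [apply: modz_ge0 | apply: ltz_pmod].
have [Hrule [i0 Hi0]] : rule n l u v <> 1%N /\ exists i0 : int, 0 <= i0 /\
    (eps = N * i0 \/ eps = Gp + N * i0 \/ eps = Dp + N * i0 \/ eps = Gp + Dp + N * i0).
  case: Hsh => [E|[Hr Hd]]; first by move: Heps0; rewrite E eqxx.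
  split => //; case: Hd => [[k _ Ek]|[g Hg [k Ek]]].
  - by exists k%:Z; split => //; left.
  - exists k%:Z; split => //; right.
    have Hg' : g = Gp \/ g = Dp \/ g = Gp + Dp.
      move: Hg; rewrite /rule_gens -/Gp -/Dp.
      case: (rule n l u v) => [|[|[|[|?]]]] /=; rewrite ?inE ?orbF //;
        first [ by move/eqP => ->; tauto | by case/or3P => /eqP ->; tauto ].
    rewrite Ek; case: Hg' => [->|[->|->]]; tauto.
have Hepsge : 0 <= eps.
  case: Hi0 => Hi00 Hc.
  have : 0 <= N * i0 by apply: mulr_ge0 => //; apply: ltW.
  case: HGp HDp => ? ? [? ?]; lia.
have [Qx EQx] := decomp n l bx; have [Qy EQy] := decomp n l by_.
have Eg := modz_eqn (cc n by_ - cc n bx) N; rewrite -/gam in Eg.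
have Ed := modz_eqn (n%:Z * (dd n l by_ - dd n l bx)) N; rewrite -/del in Ed.
have [w0 ET] : exists w0, by_ - bx = gam + del + w0 * N.
  exists (Qy - Qx + ((cc n by_ - cc n bx) %/ N)%Z + ((n%:Z * (dd n l by_ - dd n l bx)) %/ N)%Z).
  rewrite -/N in EQx EQy; lia.
have [o [w1 [w2 [EG [ED Hh]]]]] : exists (o : bool) (w1 w2 : int),
   Gp = (if o then gam else - gam) + w1 * N /\ Dp = (if o then del else - del) + w2 * N /\
   ((h%:Z = eps /\ o) \/ (h%:Z = (by_ - bx) - eps /\ o) \/ (h%:Z = eps + (by_ - bx) /\ ~~ o)).
  case: Hu' => Eu; case: Hv' => Ev; rewrite Eu Ev in Huv Ha Hb; try lia.
  - exists true, 0, 0; rewrite !mul0r !addr0 /Gp /Dp /gamp /delp Eu Ev; split => //; split => //.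
    case: Ha' => Ea; case: Hb' => Eb; lia.
split.
- apply/negP => /eqP [E1 E2].
  have G0 : Gp = 0.
    move: EG; rewrite E1 oppr0 if_same add0r => EG.
    by rewrite EG small_mult // -EG; case: HGp.
  have D0 : Dp = 0.
    move: ED; rewrite E2 oppr0 if_same add0r => ED.
    by rewrite ED small_mult // -ED; case: HDp.
  by apply: Hrule; rewrite /rule -/Gp -/Dp G0 D0 !eqxx.
- have [eta Heta Hd] := @arith N gam del Gp Dp (by_ - bx) h%:Z eps w0 w1 w2 o ET EG ED Hh
    (ex_intro _ i0 (proj2 Hi0)).
  by exists eta => //; rewrite eqz_mod_dvd.
Qed.
End Part2.

Theorem mainTheorem16 (n l m : nat) (sl : seq int) (mpl mpm : seq (seq nat))
    (lam mu : seq nat) (r : nat) (ks : seq (seq int)) (labs : seq (option nat)) :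
  (1 <= n)%N -> (1 <= l)%N -> (1 <= m)%N -> size sl = l ->
  is_multipartition l m mpl -> is_multipartition l m mpm ->
  is_partition lam -> is_partition mu ->
  corr n l sl mpl lam -> corr n l sl mpm mu ->
  sdom lam mu ->
  sumn lam = r -> sumn mu = r ->
  size [seq z <- beta (charge_sum sl) lam r | z \in beta (charge_sum sl) mu r] = (r - 2)%N ->
  good n l (charge_sum sl) lam mu r ks labs ->
  (forall ks' labs', good n l (charge_sum sl) lam mu r ks' labs' -> ks' = ks /\ labs' = labs) /\
  (let h : nat := (sumn lam - sumn (pmeet lam mu))%N in
   let bmu := beta (charge_sum sl) mu r in
   forall x y : nat, (1 <= x <= r)%N -> (1 <= y <= r)%N -> x != y ->
   (forall z, z \in beta (charge_sum sl) lam r =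
      [|| (z \in bmu) && (z != nth 0 bmu x.-1) && (z != nth 0 bmu y.-1),
          z == nth 0 bmu x.-1 + h%:Z | z == nth 0 bmu y.-1 - h%:Z]) ->
   let bx := nth 0 bmu x.-1 in let by_ := nth 0 bmu y.-1 in
   let gam := ((cc n by_ - cc n bx) %% (n * l)%N%:Z)%Z in
   let del := ((n%:Z * (dd n l by_ - dd n l bx)) %% (n * l)%N%:Z)%Z in
   (gam, del) != (0, 0) /\
   exists2 eta, eta \in [:: 0; gam; del; gam + del] & (h%:Z == eta %[mod (n * l)%N%:Z])%Z).
Proof.
move=> Hn Hl Hm Hsl Hmpl Hmpm Hpl Hpm Hcl Hcm Hsd Hrl Hrm Hcnt G.
split.
- move=> ks' labs' G'; exact: (good_uniq Hpl Hpm Hcnt G G').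
- move=> h bmu x y Hx Hy Hxy Hz bx by_ gam del.
  exact: (part2 Hn Hl Hpl Hpm Hcnt G Hz).
Qed.
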